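(* Let $r\ge 2$ be an integer. There is a constant $c_r>0$ depending only on $r$ such that the following holds. Let $G=(V,E)$ be a graph with $|V|=n$, where $n$ is sufficiently large (depending on $r$), and let $T\subseteq E^r$ be a set of $r$-tuples of edges. Then $V$ can be partitioned into disjoint sets $V_1,\ldots,V_r$, each of size $\lceil n/r\rceil$ or $\lfloor n/r \rfloor$, such that at least $c_r|T|$ of the tuples in $T$ consist only of edges each of which has both of its endpoints in the same part $V_j$ (different edges of a tuple may lie in different parts). *)

(* Defs.v *)
From mathcomp Require Import all_boot all_order all_algebra.
Set Implicit Arguments. Unset Strict Implicit. Unset Printing Implicit Defensive.

Definition simple_edges (V : finType) (E : {set {set V}}) : Prop :=
  forall e, e \in E -> #|e| = 2.

(* A map f : V -> 'I_r encodes the partition V_j = f^{-1}(j), j < r.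
   It is balanced if every part has size floor(n/r) or ceil(n/r). *)
Definition balanced_partition (V : finType) (r : nat) (f : V -> 'I_r) : Prop :=
  forall j : 'I_r,
    #|[set v | f v == j]| = #|V| %/ r \/
    #|[set v | f v == j]| = (#|V| + r.-1) %/ r.

Definition edge_inside (V : finType) (r : nat) (f : V -> 'I_r) (e : {set V}) : bool :=
  [forall x in e, forall y in e, f x == f y].

Definition good_tuple (V : finType) (r : nat) (f : V -> 'I_r)
    (t : {ffun 'I_r -> {set V}}) : bool :=
  [forall i, edge_inside f (t i)].

(* Main.v *)
Require Import Defs.
From mathcomp Require Import all_boot all_order all_algebra.
Import Order.TTheory GRing.Theory Num.Theory.
From mathcomp Require Import zify.
Set Implicit Arguments. Unset Strict Implicit. Unset Printing Implicit Defensive.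

Lemma count_mod_iota d j K : 0 < d -> j < d ->
  count (fun i => i %% d == j) (iota 0 K) = K %/ d + (j < K %% d).
Proof.
move=> d0 jd; elim: K => [|K IH]; first by rewrite div0n mod0n.
rewrite -addn1 iotaD count_cat IH /= add0n addn0.
have := divn_eq K d; have := ltn_pmod K d0.
set q := K %/ d; set p := K %% d => pd eK.
have [p1d|] := ltnP p.+1 d.
  have -> : K + 1 = q * d + p.+1 by lia.
  rewrite divnMDl // divn_small // modnMDl modn_small //.
  rewrite addn0 -addnA; congr (_ + _).
  case: (ltngtP j p) => [jp|pj|->] /=.
  - by rewrite ltnS ltnW.
  - by rewrite ltnNge pj.
  - by rewrite ltnSn.
move=> dp; have pd1 : p.+1 = d by lia.
have -> : K + 1 = q.+1 * d + 0 by lia.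
rewrite divnMDl // div0n modnMDl mod0n ltn0.
have jp : j <= p by lia.
rewrite !addn0 -addnA; suff -> : (j < p) + (p == j) = 1 by rewrite addn1.
rewrite leq_eqVlt in jp; case/orP: jp => [/eqP ->|jp']; first by rewrite eqxx ltnn.
by rewrite jp' eq_sym (ltn_eqF jp').
Qed.

Lemma card_mod_ord d j K : 0 < d -> j < d ->
  #|[set i : 'I_K | i %% d == j]| = K %/ d + (j < K %% d).
Proof.
move=> d0 jd; rewrite -count_mod_iota // -val_enum_ord count_map cardE.
rewrite -size_filter; congr size.
rewrite [LHS]/enum_mem -enumT; apply: eq_filter => i /=; by rewrite inE.
Qed.


Lemma leq_expm m n e : m <= n -> m ^ e <= n ^ e.
Proof. by case: e => [|e] mn //; rewrite leq_exp2r. Qed.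

Lemma bin_ratio n m k : k <= m -> m <= n ->
  'C(n, m) * (m - k) ^ k <= 'C(n - k, m - k) * n ^ k.
Proof.
move=> km mn; elim: k km => [|k IH] km; first by rewrite !subn0 !expn0.
have IH' := IH (ltnW km).
set a := n - k in IH'; set b := m - k in IH'.
have b1 : 0 < b by rewrite /b subn_gt0.
have ea : n - k.+1 = a.-1 by rewrite /a subnS.
have eb : m - k.+1 = b.-1 by rewrite /b subnS.
have key : 'C(a, b) * b = a * 'C(a.-1, b.-1).
  by rewrite mulnC mul_bin_diag prednK.
rewrite ea eb.
apply: (@leq_trans ('C(n, m) * (b ^ k * b.-1))).
  rewrite leq_mul2l expnSr leq_mul2r; apply/orP; right; apply/orP; right.
  by apply: leq_expm; rewrite leq_pred.
apply: (@leq_trans ('C(a, b) * n ^ k * b.-1)).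
  by rewrite mulnA leq_mul2r IH' orbT.
apply: (@leq_trans ('C(a, b) * b * n ^ k)).
  by rewrite [X in _ <= X]mulnAC leq_mul2l leq_pred orbT.
rewrite key expnS mulnA [_ * n]mulnC leq_mul2r leq_mul2r /a leq_subr !orbT //.
Qed.

Lemma card_bigcup_le (V : finType) r (t : 'I_r -> {set V}) :
  #|\bigcup_(i < r) t i| <= \sum_(i < r) #|t i|.
Proof.
apply: (big_ind2 (fun (A : {set V}) s => #|A| <= s)).
- by rewrite cards0.
- move=> A1 s1 A2 s2 h1 h2; apply: leq_trans (leq_card_setU A1 A2) _.
  exact: leq_add.
- by [].
Qed.


Lemma arith_bal n r' j : j < r'.+1 ->
  let K := n - (n + r'.+1) %/ r'.+2 in
  K %/ r'.+1 + (j < K %% r'.+1) = n %/ r'.+2 \/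
  K %/ r'.+1 + (j < K %% r'.+1) = (n + r'.+1) %/ r'.+2.
Proof.
move=> jr /=.
have e := divn_eq n r'.+2; have lt := ltn_pmod n (ltn0Sn r'.+1).
move: e lt; set q := n %/ r'.+2; set p := n %% r'.+2 => e lt.
case: p e lt => [|p'] e lt.
  have e1 : (n + r'.+1) %/ r'.+2 = q.
    by rewrite e addn0 divnMDl // divn_small ?addn0.
  have eK : n - q = q * r'.+1 + 0 by rewrite e; lia.
  left; rewrite e1 eK divnMDl // modnMDl div0n mod0n ltn0 !addn0.
  by [].
have e1 : (n + r'.+1) %/ r'.+2 = q.+1.
  have -> : n + r'.+1 = q.+1 * r'.+2 + p' by rewrite e; lia.
  by rewrite divnMDl // divn_small ?addn0 //; lia.
have p'r : p' < r'.+1 by lia.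
have eK : n - q.+1 = q * r'.+1 + p' by rewrite e; lia.
rewrite e1 eK divnMDl // modnMDl divn_small // modn_small // addn0.
by case: (j < p'); [right; rewrite addn1 | left; rewrite addn0].
Qed.

Lemma arith_main n r m p : 2 <= r -> 4*r*r + 2 <= n -> n + r.-1 = m * r + p -> p < r ->
  [/\ n <= m*r, m < n & n <= (m - 2*r)*(2*r)].
Proof.
move=> r2 Nn e pr.
have h1 : n <= m * r by lia.
have h2 : m < n.
  rewrite ltnNge; apply/negP => nm.
  have : n * r <= m * r by rewrite leq_mul2r nm orbT.
  have : n * 2 <= n * r by rewrite leq_mul2l r2 orbT.
  lia.
split => //.
have m2 : 2 * r <= m by nia.
rewrite mulnBl; nia.
Qed.


Lemma balanced_from (V : finType) r' (A : {set V}) :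
  #|A| = (#|V| + r'.+1) %/ r'.+2 -> #|A| < #|V| ->
  exists f : V -> 'I_r'.+2, balanced_partition f /\ (forall v, v \in A -> f v = ord0).
Proof.
move=> cA ltA.
have [x0 Hx0] : exists x0, x0 \in ~: A.
  apply/set0Pn; rewrite -card_gt0 cardsCs setCK; lia.
pose g (v : V) : 'I_r'.+2 := inord (1 + (enum_rank_in Hx0 v) %% r'.+1).
have gv v : nat_of_ord (g v) = 1 + (enum_rank_in Hx0 v) %% r'.+1.
  rewrite /g inordK // add1n ltnS; exact: ltn_pmod.
exists (fun v => if v \in A then ord0 else g v); split; last by move=> v ->.
move=> j.
case: (unliftP ord0 j) => [j'|] ->.
-
  have -> : [set v | (if v \in A then ord0 else g v) == lift ord0 j'] =
            enum_val @: [set i : 'I_#|~: A| | i %% r'.+1 == j'].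
    apply/setP => v; rewrite !inE.
    apply/idP/idP.
    + case: ifP => vA // /eqP gj.
      have vB : v \in ~: A by rewrite inE vA.
      apply/imsetP; exists (enum_rank_in Hx0 v); last by rewrite enum_rankK_in.
      rewrite inE; move/(congr1 (@nat_of_ord _)): gj; rewrite gv /= /bump /= => h; apply/eqP; lia.
    + case/imsetP => i; rewrite inE => /eqP ij ->.
      have := enum_valP i; rewrite inE => /negbTE ->.
      apply/eqP; apply: (@ord_inj _ _ _); by rewrite gv enum_valK_in /= /bump /= ij.
  rewrite card_imset; last exact: enum_val_inj.
  rewrite card_mod_ord // cardsCs setCK cA.
  exact: arith_bal.
- right.
  have -> : [set v | (if v \in A then ord0 else g v) == ord0] = A.
    apply/setP => v; rewrite inE; case: ifP => vA; first by rewrite eqxx.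
    apply/negbTE; apply/eqP => /(congr1 (@nat_of_ord _)); rewrite gv /=; lia.
  by rewrite cA.
Qed.

Unset Implicit Arguments.

Lemma card_sep (X : finType) (T : {set X}) (P : pred X) :
  #|[set t in T | P t]| = \sum_(t in T) (P t : nat).
Proof.
rewrite -sum1_card (eq_bigl (fun t => (t \in T) && P t)); last by move=> t; rewrite !inE.
by rewrite big_mkcondr /=; apply: eq_bigr => t _; case: (P t).
Qed.

Lemma contain_count (V : finType) (S : {set V}) m :
  #|S| <= m ->
  'C(#|V| - #|S|, m - #|S|) <= #|[set A : {set V} | (#|A| == m) && (S \subset A)]|.
Proof.
move=> Sm.
set D := [set X : {set V} | X \subset ~: S & #|X| == m - #|S|].
have cD : #|D| = 'C(#|V| - #|S|, m - #|S|) by rewrite cards_draws cardsCs setCK.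
rewrite -cD -(@card_in_imset _ _ (fun X => X :|: S) D).
  apply: subset_leq_card; apply/subsetP => Y /imsetP [X XD ->].
  move: XD; rewrite /D inE => /andP [XS /eqP cX]; rewrite inE subsetUr andbT.
  rewrite cardsU.
  have -> : X :&: S = set0.
    apply/setP => v; rewrite !inE; apply/negbTE; apply/andP => -[vX vS].
    by have := subsetP XS v vX; rewrite inE vS.
  by rewrite cards0 subn0 cX subnK.
move=> X1 X2; rewrite /D !inE => /andP [X1S _] /andP [X2S _] e.
have h (X : {set V}) : X \subset ~: S -> X = (X :|: S) :\: S.
  move=> XS; apply/setP => v; rewrite !inE; case vX: (v \in X) => /=; last by case: (v \in S).
  by have := subsetP XS v vX; rewrite inE => ->.
by rewrite (h _ X1S) (h _ X2S) e.
Qed.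

Theorem lemma2p5 :
  forall r : nat, 2 <= r ->
  exists c : rat, (0 < c)%R /\
  exists N : nat,
  forall (V : finType), N <= #|V| ->
  forall (E : {set {set V}}), simple_edges E ->
  forall (T : {set {ffun 'I_r -> {set V}}}),
    (forall t, t \in T -> forall i, t i \in E) ->
  exists f : V -> 'I_r,
    balanced_partition f /\
    (c * (#|T|)%:R <= (#|[set t in T | good_tuple f t]|)%:R)%R.
Proof.
case=> [|[|r']] // _.
set r := r'.+2.
set D := (2 * r) ^ (2 * r).
have D0 : 0 < D by rewrite expn_gt0.
exists (D%:R^-1)%R; split; first by rewrite invr_gt0 ltr0n.
exists (4 * r * r + 2) => V NV E sE T TE.
set n := #|V|.
set m := (n + r.-1) %/ r.
have [mrn mn m2r] : [/\ n <= m*r, m < n & n <= (m - 2*r)*(2*r)].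
  apply: (@arith_main n r m ((n + r.-1) %% r)) => //.
  - exact: divn_eq.
  - exact: ltn_pmod.
pose S (t : {ffun 'I_r -> {set V}}) := \bigcup_(i < r) t i.
have cS t : t \in T -> #|S t| <= 2 * r.
  move=> tT; apply: leq_trans (card_bigcup_le _) _.
  rewrite (eq_bigr (fun _ => 2)); last by move=> i _; apply: sE; apply: TE.
  by rewrite sum_nat_const card_ord mulnC.
pose F := [set A : {set V} | #|A| == m].
pose good (A : {set V}) := #|[set t in T | S t \subset A]|.
have cF : #|F| = 'C(n, m) by rewrite card_draws.
have Cpos : 0 < 'C(n, m) by rewrite bin_gt0 ltnW.
have [A0 A0F] : exists A0, A0 \in F.
  by apply/set0Pn; rewrite -card_gt0 cF.
have per t : t \in T -> 'C(n, m) <= #|[set A in F | S t \subset A]| * D.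
  move=> tT; set k := #|S t|.
  have kr := cS t tT.
  have km : k <= m by lia.
  have h1 := bin_ratio km (ltnW mn).
  have h2 : n ^ k <= (m - k) ^ k * (2 * r) ^ k.
    rewrite -expnMn; apply: leq_expm; apply: leq_trans m2r _.
    by rewrite leq_mul2r leq_sub2l ?orbT.
  have h3 : 'C(n, m) <= 'C(n - k, m - k) * (2 * r) ^ k.
    have npos : 0 < n ^ k by rewrite expn_gt0; lia.
    rewrite -(leq_pmul2r npos).
    apply: leq_trans (_ : 'C(n, m) * ((m - k) ^ k * (2 * r) ^ k) <= _).
      by rewrite leq_mul2l h2 orbT.
    rewrite mulnA; apply: leq_trans (_ : 'C(n - k, m - k) * n ^ k * (2 * r) ^ k <= _).
      by rewrite leq_mul2r h1 orbT.
    by rewrite mulnAC.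
  apply: leq_trans h3 _; apply: leq_mul.
    apply: leq_trans (@contain_count V (S t) m km) _.
    by apply: subset_leq_card; apply/subsetP => A; rewrite !inE.
  by apply: leq_pexp2l; lia.
have dc : \sum_(A in F) good A = \sum_(t in T) #|[set A in F | S t \subset A]|.
  have e1 A : good A = \sum_(t in T) (S t \subset A : nat) by rewrite /good card_sep.
  rewrite (eq_bigr _ (fun A _ => e1 A)).
  rewrite exchange_big /=; apply: eq_bigr => t _.
  by rewrite card_sep.
have sumlb : #|T| * 'C(n, m) <= (\sum_(A in F) good A) * D.
  rewrite dc big_distrl /= -sum_nat_const; apply: leq_sum => t tT; exact: per.
case: (@arg_maxnP _ A0 (fun A => A \in F) good A0F) => Am AmF Hmax.
have sumub : \sum_(A in F) good A <= 'C(n, m) * good Am.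
  rewrite -cF -sum_nat_const; apply: leq_sum => A AF; exact: Hmax.
have key : #|T| <= good Am * D.
  rewrite -(leq_pmul2r Cpos) mulnAC; apply: leq_trans sumlb _.
  by rewrite leq_mul2r [good Am * _]mulnC sumub orbT.
have cAm : #|Am| = (#|V| + r'.+1) %/ r'.+2 by move: AmF; rewrite inE => /eqP.
have ltA : #|Am| < #|V| by rewrite cAm; exact: mn.
have [f [bf f0]] := balanced_from cAm ltA.
exists f; split => //.
have sub : good Am <= #|[set t in T | good_tuple f t]|.
  apply: subset_leq_card; apply/subsetP => t; rewrite !inE => /andP [tT StA].
  rewrite tT /=; apply/forallP => i; apply/forallP => x; apply/implyP => xt.
  apply/forallP => y; apply/implyP => yt.
  have hx : x \in Am by apply: (subsetP StA); apply/bigcupP; exists i.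
  have hy : y \in Am by apply: (subsetP StA); apply/bigcupP; exists i.
  by rewrite (f0 _ hx) (f0 _ hy).
rewrite mulrC ler_pdivrMr ?ltr0n // -natrM ler_nat.
apply: leq_trans key _; by rewrite leq_mul2r sub orbT.
Qed.
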